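(* Let $\kappa > 3/2$ and $T_\mathrm{eff} > 0$ (temperatures in energy units, Boltzmann constant $k=1$), and set $T_0 = (\kappa - 3/2)\,T_\mathrm{eff}$. Let $f_\kappa$ be the kappa electron energy distribution on $E \in (0,\infty)$, $$f^{(\kappa)}_E(E) = \frac{2}{\sqrt{\pi}}\,\frac{\Gamma(\kappa+1)}{\Gamma(\kappa-\tfrac12)}\,T_0^{-3/2}\,\sqrt{E}\,\Bigl(1+\frac{E}{T_0}\Bigr)^{-(\kappa+1)},$$ with velocity-space analogue $f^{(\kappa)}_v(E) = f^{(\kappa)}_E(E)/\sqrt{E}$. Define the radio (source-function) temperature $T_B = \langle E^{-1/2}\rangle_{f_\kappa} / f^{(\kappa)}_v(0)$, where $\langle E^{-1/2}\rangle_{f_\kappa} = \int_0^\infty E^{-1/2} f^{(\kappa)}_E(E)\,dE$. Let $T_\mathrm{EUV} > 0$ be the EUV moment-matched temperature and define the correction $\varepsilon_\mathrm{EUV}$ by $T_\mathrm{EUV} = T_\mathrm{eff}\,(1+\varepsilon_\mathrm{EUV})$. Then $$R \equiv \frac{T_\mathrm{EUV}}{T_B} = \frac{\kappa}{\kappa - 3/2}\,\bigl(1+\varepsilon_\mathrm{EUV}\bigr).$$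
   Context: The distribution $f^{(\kappa)}_E$ is a probability density on $(0,\infty)$ whose mean energy is $\langle E\rangle = \tfrac32 T_\mathrm{eff}$ for every $\kappa>3/2$ (the ''mean-energy'' or Dzifčáková–Dudík convention). The quantity $T_B$ is the ratio of the moment $\langle 1/v\rangle \propto \langle E^{-1/2}\rangle$ (proportional to the low-frequency free-free emissivity) to $f_v(0)$ (proportional to the low-frequency free-free absorption coefficient), normalized so that for a Maxwellian energy density $\frac{2}{\sqrt\pi}T^{-3/2}\sqrt{E}e^{-E/T}$ it returns exactly $T$. The core temperature is $T_\mathrm{core} = \frac{\kappa-3/2}{\kappa}T_\mathrm{eff}$. *)

(* Defs.v *)
From Stdlib Require Import Reals.
From Coquelicot Require Import Coquelicot.
Open Scope R_scope.

Definition Gamma (s : R) : R :=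
  RInt_gen (fun t => Rpower t (s - 1) * exp (- t)) (at_right 0) (Rbar_locally p_infty).

Definition T0 (kappa Teff : R) : R := (kappa - 3/2) * Teff.

Definition kappa_norm (kappa Teff : R) : R :=
  2 / sqrt PI * (Gamma (kappa + 1) / Gamma (kappa - 1/2)) * Rpower (T0 kappa Teff) (-(3/2)).

Definition f_kappa_E (kappa Teff E : R) : R :=
  kappa_norm kappa Teff * sqrt E * Rpower (1 + E / T0 kappa Teff) (-(kappa + 1)).

(* velocity-space analogue f_v(E) = f_E(E)/sqrt(E), written with sqrt E cancelled
   so that it is defined (continuously) at E = 0 *)
Definition f_kappa_v (kappa Teff E : R) : R :=
  kappa_norm kappa Teff * Rpower (1 + E / T0 kappa Teff) (-(kappa + 1)).

Definition mean_inv_sqrtE (kappa Teff : R) : R :=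
  RInt_gen (fun E => / sqrt E * f_kappa_E kappa Teff E) (at_right 0) (Rbar_locally p_infty).

Definition T_B (kappa Teff : R) : R := mean_inv_sqrtE kappa Teff / f_kappa_v kappa Teff 0.

(* Main.v *)
Require Import Defs.
From Stdlib Require Import Reals Lra.
From Coquelicot Require Import Coquelicot.
Open Scope R_scope.

Lemma gen_right (f : R -> R) (c l : R) (F : (R -> Prop) -> Prop) :
  Filter F -> F (fun b => ex_RInt f c b) ->
  filterlim (fun b => RInt f c b) F (locally l) -> is_RInt_gen f (at_point c) F l.
Proof.
  intros FF Hex Hlim P HP. unfold filtermapi.
  apply Filter_prod with (fun a => a = c) (fun b => ex_RInt f c b /\ P (RInt f c b)).
  - reflexivity.
  - apply filter_and; [exact Hex| exact (Hlim P HP)].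
  - intros x y -> [H1 H2]. exists (@RInt R_CompleteNormedModule f c y). split; [exact (RInt_correct _ _ _ H1)| exact H2].
Qed.

Lemma gen_left (f : R -> R) (c l : R) (F : (R -> Prop) -> Prop) :
  Filter F -> F (fun a => ex_RInt f a c) ->
  filterlim (fun a => RInt f a c) F (locally l) -> is_RInt_gen f F (at_point c) l.
Proof.
  intros FF Hex Hlim P HP. unfold filtermapi.
  apply Filter_prod with (fun a => ex_RInt f a c /\ P (RInt f a c)) (fun b => b = c).
  - apply filter_and; [exact Hex| exact (Hlim P HP)].
  - reflexivity.
  - intros x y [H1 H2] ->. exists (@RInt R_CompleteNormedModule f x c). split; [exact (RInt_correct _ _ _ H1)| exact H2].
Qed.

Lemma ball_R (x y e : R) : Rabs (y - x) < e -> ball x e y.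
Proof. intros H. exact H. Qed.

Lemma cauchy_pinfty (g : R -> R) :
  (forall eps : posreal, exists M, forall u v, M < u -> M < v -> Rabs (g v - g u) < eps) ->
  exists l : R, filterlim g (Rbar_locally p_infty) (locally l).
Proof.
  intros H.
  destruct (proj1 (filterlim_locally_cauchy (U := R_CompleteSpace) (F := Rbar_locally p_infty) g)) as [l Hl].
  - intros eps. destruct (H eps) as [M HM]. exists (fun u => M < u). split.
    + exists M. auto.
    + intros u v Hu Hv. apply ball_R. apply HM; auto.
  - exists l. exact Hl.
Qed.

Lemma cauchy_right0 (g : R -> R) :
  (forall eps : posreal, exists d, 0 < d /\ forall u v, 0 < u < d -> 0 < v < d -> Rabs (g v - g u) < eps) ->
  exists l : R, filterlim g (at_right 0) (locally l).
Proof.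
  intros H.
  destruct (proj1 (filterlim_locally_cauchy (U := R_CompleteSpace) (F := at_right 0) g)) as [l Hl].
  - intros eps. destruct (H eps) as [d [Hd HM]]. exists (fun u => 0 < u < d). split.
    + exists (mkposreal d Hd). intros y Hy Hy0. simpl in Hy. 
      change (Rabs (y - 0) < d) in Hy. apply Rabs_def2 in Hy. lra.
    + intros u v Hu Hv. apply ball_R. apply HM; auto.
  - exists l. exact Hl.
Qed.

Lemma tail_ex (f : R -> R) (c K : R) : 0 < c ->
  (forall x, c <= x -> continuous f x) ->
  (forall x, c <= x -> 0 <= f x <= K / x^2) ->
  exists l, is_RInt_gen f (at_point c) (Rbar_locally p_infty) l /\ RInt f c (c+1) <= l.
Proof.
  intros Hc Hcont Hb.
  assert (HK : 0 <= K).
  { destruct (Hb c (Rle_refl c)) as [H1 H2].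
    assert (0 < c^2) by (apply pow_lt; lra).
    assert (0 <= K / c^2) by lra.
    apply Rmult_le_reg_r with (/ c^2). apply Rinv_0_lt_compat; lra. lra. }
  assert (Hex : forall a b, c <= a -> c <= b -> ex_RInt f a b).
  { intros a b Ha Hb'. apply (ex_RInt_continuous (V:=R_CompleteNormedModule)). intros z Hz. apply Hcont.
    destruct Hz as [Hz _]. eapply Rle_trans; [|exact Hz].
    apply Rmin_case; lra. }
  assert (Hg : forall u v, c <= u <= v -> is_RInt (fun x => K / x^2) u v (K/u - K/v)).
  { intros u v Huv.
    replace (K/u - K/v) with (minus ((fun x => - K / x) v) ((fun x => - K / x) u)).
    2:{ unfold minus, plus, opp; simpl. field. split; lra. }
    apply (is_RInt_derive (V:=R_CompleteNormedModule) (fun x => - K / x)).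
    - intros x Hx. assert (0 < x).
      { destruct Hx as [Hx _]. eapply Rlt_le_trans; [|exact Hx]. apply Rmin_case; lra. }
      auto_derive. lra. field. lra.
    - intros x Hx. assert (0 < x).
      { destruct Hx as [Hx _]. eapply Rlt_le_trans; [|exact Hx]. apply Rmin_case; lra. }
      apply continuity_pt_filterlim.
      apply continuity_pt_div. apply continuity_pt_const. intros a b; reflexivity.
      apply continuity_pt_mult. apply derivable_continuous_pt, derivable_pt_id.
      apply continuity_pt_mult. apply derivable_continuous_pt, derivable_pt_id.
      apply continuity_pt_const. intros a b; reflexivity.
      apply pow_nonzero. lra. }
  assert (Hd : forall u v, c <= u <= v -> 0 <= RInt f c v - RInt f c u <= K / u).
  { intros u v Huv.
    assert (E : RInt f c v - RInt f c u = RInt f u v).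
    { rewrite <- (RInt_Chasles f c u v); try (apply Hex; lra).
      unfold plus; simpl. ring. }
    rewrite E. split.
    - apply RInt_ge_0. lra. apply Hex; lra. intros x Hx. apply Hb. lra.
    - apply Rle_trans with (K/u - K/v).
      + rewrite <- (is_RInt_unique _ _ _ _ (Hg u v Huv)).
        apply RInt_le. lra. apply Hex; lra. eexists; apply Hg; lra.
        intros x Hx. apply Hb. lra.
      + assert (0 <= K / v). { apply Rdiv_le_0_compat; lra. } lra. }
  destruct (cauchy_pinfty (fun b => RInt f c b)) as [l Hl].
  - intros eps. exists (c + K / eps). intros u v Hu Hv.
    assert (HKe : 0 <= K / eps). { apply Rdiv_le_0_compat. lra. apply cond_pos. }
    assert (Hm : forall w, c + K/eps < w -> K / w < eps).
    { intros w Hw. assert (0 < w) by lra.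
      apply Rmult_lt_reg_r with w. lra. unfold Rdiv. rewrite Rmult_assoc, Rinv_l by lra.
      assert (K = eps * (K / eps)). { field. apply Rgt_not_eq, cond_pos. }
      assert (0 < eps) by apply cond_pos. nra. }
    destruct (Rle_dec u v).
    + destruct (Hd u v) as [H1 H2]; [lra|]. specialize (Hm u Hu).
      rewrite Rabs_right by lra. lra.
    + destruct (Hd v u) as [H1 H2]; [lra|]. specialize (Hm v Hv).
      rewrite Rabs_left1 by lra. lra.
  - exists l. split.
    + apply gen_right. apply Rbar_locally_filter. exists c. intros x Hx. apply Hex; lra. exact Hl.
    + apply (filterlim_le (F := Rbar_locally p_infty) (fun _ => RInt f c (c+1)) (fun b => RInt f c b) (RInt f c (c+1)) l).
      * exists (c+1). intros x Hx. destruct (Hd (c+1) x) as [H1 _]; lra.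
      * apply filterlim_const.
      * exact Hl.
Qed.

Lemma head_ex (f : R -> R) (c B : R) : 0 < c ->
  (forall x, 0 < x <= c -> continuous f x) ->
  (forall x, 0 < x <= c -> 0 <= f x <= B) ->
  exists l, is_RInt_gen f (at_right 0) (at_point c) l /\ 0 <= l.
Proof.
  intros Hc Hcont Hb.
  assert (HB : 0 <= B). { destruct (Hb c) as [H1 H2]; lra. }
  assert (Hex : forall a b, 0 < a <= c -> 0 < b <= c -> ex_RInt f a b).
  { intros a b Ha Hb'. apply (ex_RInt_continuous (V:=R_CompleteNormedModule)). intros z Hz. apply Hcont.
    destruct Hz as [Hz1 Hz2]. split.
    - eapply Rlt_le_trans; [|exact Hz1]. apply Rmin_case; lra.
    - eapply Rle_trans; [exact Hz2|]. apply Rmax_case; lra. }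
  destruct (cauchy_right0 (fun a => RInt f a c)) as [l Hl].
  - intros eps. assert (He : 0 < eps) by apply cond_pos.
    exists (Rmin c (eps / (B+1))). split.
    { apply Rmin_case. lra. apply Rdiv_lt_0_compat; lra. }
    intros u v Hu Hv.
    assert (Hu' : u < eps/(B+1)) by (eapply Rlt_le_trans; [apply Hu| apply Rmin_r]).
    assert (Hv' : v < eps/(B+1)) by (eapply Rlt_le_trans; [apply Hv| apply Rmin_r]).
    assert (Huc : u <= c) by (assert (Rmin c (eps/(B+1)) <= c) by apply Rmin_l; lra).
    assert (Hvc : v <= c) by (assert (Rmin c (eps/(B+1)) <= c) by apply Rmin_l; lra).
    assert (E : RInt f v c - RInt f u c = RInt f v u).
    { rewrite <- (RInt_Chasles f v u c); try (apply Hex; lra).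
      unfold plus; simpl. ring. }
    rewrite E.
    assert (Hn := norm_RInt_le_const_abs f v u (RInt f v u) B).
    assert (Hn' : Rabs (RInt f v u) <= Rabs (u - v) * B).
    { apply Hn.
      - intros x Hx. assert (0 < x <= c).
        { destruct Hx as [Hx1 Hx2]. split.
          - eapply Rlt_le_trans; [|exact Hx1]. apply Rmin_case; lra.
          - eapply Rle_trans; [exact Hx2|]. apply Rmax_case; lra. }
        specialize (Hb x H). unfold norm; simpl. rewrite Rabs_right; lra.
      - apply (RInt_correct (V:=R_CompleteNormedModule)). apply Hex; lra. }
    assert (Hd : Rabs (u - v) < eps / (B+1)).
    { apply Rabs_def1; lra. }
    assert (Hq : eps / (B+1) * B < eps).
    { apply Rmult_lt_reg_r with (B+1). lra.
      unfold Rdiv. replace (eps * / (B + 1) * B * (B + 1)) with (eps * B * ((B+1) * / (B+1))) by ring.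
      rewrite Rinv_r by lra. nra. }
    assert (Rabs (u - v) * B <= eps / (B+1) * B).
    { apply Rmult_le_compat_r; lra. }
    lra.
  - exists l. split.
    + apply gen_left. apply at_right_proper_filter.
      exists (mkposreal c Hc). intros y Hy Hy0. simpl in Hy.
      change (Rabs (y - 0) < c) in Hy. apply Rabs_def2 in Hy. apply Hex; lra.
      exact Hl.
    + apply (filterlim_le (F := at_right 0) (fun _ => 0) (fun a => RInt f a c) 0 l).
      * exists (mkposreal c Hc). intros y Hy Hy0. simpl in Hy.
        change (Rabs (y - 0) < c) in Hy. apply Rabs_def2 in Hy.
        apply RInt_ge_0. lra. apply Hex; lra. intros x Hx. apply Hb. lra.
      * apply filterlim_const.
      * exact Hl.
Qed.

Lemma exd_pow (y x : R) : 0 < x -> ex_derive (fun t => Rpower t y) x.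
Proof. intros Hx. exists (y * Rpower x (y - 1)). apply is_derive_Reals. apply derivable_pt_lim_power. exact Hx. Qed.

Definition gint (s : R) (t : R) : R := Rpower t (s - 1) * exp (- t).

Lemma gint_cont (s x : R) : 0 < x -> continuous (gint s) x.
Proof.
  intros Hx. apply (ex_derive_continuous (V:=R_NormedModule)). unfold gint.
  apply (ex_derive_mult (fun t => Rpower t (s-1)) (fun t => exp (-t))).
  apply exd_pow; exact Hx. auto_derive. trivial.
Qed.

Lemma exp_le_exp' (x y : R) : x <= y -> exp x <= exp y.
Proof. intros [H|H]. left; apply exp_increasing; exact H. subst; lra. Qed.

Lemma Rpower_le1 (t y : R) : 0 < t <= 1 -> 0 <= y -> Rpower t y <= 1.
Proof.
  intros [H1 H2] Hy. unfold Rpower. rewrite <- exp_0. apply exp_le_exp'.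
  assert (ln t <= 0). { rewrite <- ln_1. apply ln_le; lra. } nra.
Qed.

Lemma Rpower_exp (y a : R) : Rpower (exp y) a = exp (a * y).
Proof. unfold Rpower. rewrite ln_exp. reflexivity. Qed.

Lemma gint_tail (s x : R) : 1 < s -> 0 < x ->
  gint s x <= Rpower (s+1) (s+1) / x^2.
Proof.
  intros Hs Hx. unfold gint. set (a := s + 1).
  assert (Ha : 0 < a) by (unfold a; lra).
  assert (E1 : Rpower x a = Rpower x (s-1) * x^2).
  { unfold a. replace (s+1) with ((s-1) + INR 2) by (simpl; ring).
    rewrite Rpower_plus, Rpower_pow by exact Hx. reflexivity. }
  assert (E2 : Rpower x a = Rpower a a * Rpower (x/a) a).
  { rewrite Rpower_mult_distr by (try apply Rdiv_lt_0_compat; lra). f_equal. field. lra. }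
  assert (B1 : Rpower (x/a) a <= exp x).
  { replace (exp x) with (Rpower (exp (x/a)) a).
    2:{ rewrite Rpower_exp. f_equal. field. lra. }
    apply Rle_Rpower_l. lra. split. apply Rdiv_lt_0_compat; lra.
    assert (H := exp_ineq1_le (x/a)). lra. }
  assert (Hx2 : 0 < x^2) by (apply pow_lt; lra).
  assert (HK : 0 < Rpower a a) by (unfold Rpower; apply exp_pos).
  assert (Hp : 0 <= Rpower x (s-1)) by (unfold Rpower; left; apply exp_pos).
  assert (He : exp x * exp (-x) = 1) by (rewrite <- exp_plus; replace (x + - x) with 0 by ring; apply exp_0).
  assert (Hem : 0 < exp (-x)) by apply exp_pos.
  apply Rmult_le_reg_r with (x^2). exact Hx2.
  replace (Rpower a a / x ^ 2 * x ^ 2) with (Rpower a a) by (field; lra).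
  replace (Rpower x (s - 1) * exp (- x) * x ^ 2) with (Rpower x a * exp (-x)) by (rewrite E1; ring).
  rewrite E2.
  apply Rle_trans with (Rpower a a * exp x * exp (-x)).
  - rewrite Rmult_assoc. rewrite (Rmult_assoc (Rpower a a)). apply Rmult_le_compat_l. lra.
    apply Rmult_le_compat_r; lra.
  - rewrite Rmult_assoc, He. lra.
Qed.

Lemma Gamma_pos_aux (s : R) : 1 < s ->
  exists l, is_RInt_gen (gint s) (at_right 0) (Rbar_locally p_infty) l /\ 0 < l.
Proof.
  intros Hs.
  destruct (head_ex (gint s) 1 1) as [l1 [H1 P1]].
  - lra.
  - intros x Hx. apply gint_cont. lra.
  - intros x Hx. unfold gint.
    assert (0 <= Rpower x (s-1) <= 1).
    { split. unfold Rpower; left; apply exp_pos. apply Rpower_le1; lra. }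
    assert (0 < exp (-x) <= 1).
    { split. apply exp_pos. rewrite <- exp_0. apply exp_le_exp'. lra. }
    split. apply Rmult_le_pos; lra. 
    apply Rle_trans with (1*1); [apply Rmult_le_compat; lra | lra].
  - destruct (tail_ex (gint s) 1 (Rpower (s+1) (s+1))) as [l2 [H2 P2]].
    + lra.
    + intros x Hx. apply gint_cont. lra.
    + intros x Hx. split.
      * unfold gint. apply Rmult_le_pos. unfold Rpower; left; apply exp_pos. left; apply exp_pos.
      * apply gint_tail; lra.
    + exists (plus l1 l2). split.
      * apply (is_RInt_gen_Chasles (gint s) 1 l1 l2 H1 H2).
      * assert (0 < RInt (gint s) 1 (1+1)).
        { apply RInt_gt_0. lra. intros x Hx. unfold gint. apply Rmult_lt_0_compat; apply exp_pos.
          intros x Hx. apply gint_cont. lra. }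
        unfold plus; simpl. lra.
Qed.

Section K.
Variables C T k : R.
Hypothesis HT : 0 < T.
Hypothesis Hk : 1 < k.

Let F (E : R) := - C * T / k * exp (-k * ln (1 + E/T)).
Let h (E : R) := C * Rpower (1 + E/T) (-(k+1)).

Lemma F_der x : 0 <= x -> is_derive F x (h x).
Proof.
  intros Hx. unfold F, h. auto_derive.
  - assert (0 <= x / T) by (apply Rdiv_le_0_compat; lra). unfold Rdiv in *. lra.
  - unfold Rpower. set (L := ln (1 + x/T)).
    assert (Hp : 0 < 1 + x/T) by (assert (0 <= x / T) by (apply Rdiv_le_0_compat; lra); lra).
    replace (-(k+1)*L) with (-k*L + - L) by ring. rewrite exp_plus, exp_Ropp.
    unfold L. rewrite exp_ln by exact Hp. unfold Rdiv in *. set (Z := exp _). field. split. lra. split. lra. lra.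
Qed.

Lemma h_cont x : 0 <= x -> continuous h x.
Proof.
  intros Hx. apply (ex_derive_continuous (V:=R_NormedModule)). unfold h, Rpower. auto_derive.
  assert (0 <= x / T) by (apply Rdiv_le_0_compat; lra). unfold Rdiv in *. lra.
Qed.

Lemma F_lim0 : filterlim F (at_right 0) (locally (- C * T / k)).
Proof.
  replace (- C * T / k) with (F 0).
  2:{ unfold F. replace (1 + 0/T) with 1 by (field; lra). rewrite ln_1.
      replace (-k*0) with 0 by ring. rewrite exp_0. ring. }
  eapply filterlim_filter_le_1. apply filter_le_within.
  apply (ex_derive_continuous (V:=R_NormedModule)). exists (h 0). apply F_der. lra.
Qed.

Lemma F_liminf : filterlim F (Rbar_locally p_infty) (locally 0).
Proof.
  apply filterlim_locally. intros eps.
  set (A := Rabs (C * T / k)).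
  assert (HA : 0 <= A) by apply Rabs_pos.
  assert (He : 0 < eps) by apply cond_pos.
  exists (A * T / eps). intros E HE.
  assert (HM : 0 <= A * T / eps) by (apply Rdiv_le_0_compat; [apply Rmult_le_pos; lra| lra]).
  assert (HE0 : 0 < E) by lra.
  change (Rabs (F E - 0) < eps).
  assert (Hp : 1 < 1 + E/T) by (assert (0 < E / T) by (apply Rdiv_lt_0_compat; lra); lra).
  set (L := ln (1 + E/T)).
  assert (HL : 0 < L) by (unfold L; rewrite <- ln_1; apply ln_increasing; lra).
  assert (B1 : exp (-k * L) <= exp (- L)).
  { left. apply exp_increasing. nra. }
  assert (B2 : exp (- L) = T / (T + E)).
  { rewrite exp_Ropp. unfold L. rewrite exp_ln by lra. field. lra. }
  unfold F. fold L. rewrite Rminus_0_r, Rabs_mult.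
  replace (- C * T / k) with (- (C * T / k)) by (unfold Rdiv; ring).
  rewrite Rabs_Ropp. fold A. rewrite (Rabs_right (exp _)) by (left; apply exp_pos).
  apply Rle_lt_trans with (A * (T / (T + E))).
  - apply Rmult_le_compat_l; lra.
  - assert (A * T < eps * (T + E)).
    { assert (A * T = eps * (A * T / eps)) by (field; lra). nra. }
    replace (A * (T / (T + E))) with (A * T / (T + E)) by (field; lra).
    apply Rmult_lt_reg_r with (T + E). lra.
    replace (A * T / (T + E) * (T + E)) with (A * T) by (field; lra). exact H.
Qed.

Lemma kint : is_RInt_gen h (at_right 0) (Rbar_locally p_infty) (C * T / k).
Proof.
  assert (Hpos : filter_prod (at_right 0) (Rbar_locally p_infty) (fun ab => 0 < fst ab /\ 0 < snd ab)).
  { apply Filter_prod with (fun a => 0 < a) (fun b => 0 < b).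
    - exists (mkposreal 1 Rlt_0_1). intros y _ Hy. exact Hy.
    - exists 0. intros; assumption.
    - intros x y Hx Hy. simpl. auto. }
  apply is_RInt_gen_ext with (Derive F).
  { eapply filter_imp; [|exact Hpos]. intros [a b] [Ha Hb] x Hx. simpl in *.
    apply is_derive_unique. apply F_der.
    destruct Hx as [Hx _]. left. eapply Rle_lt_trans; [|exact Hx]. apply Rmin_case; lra. }
  replace (C * T / k) with (0 - (- C * T / k)) by (unfold Rdiv; ring).
  apply is_RInt_gen_Derive.
  - eapply filter_imp; [|exact Hpos]. intros [a b] [Ha Hb] x Hx. simpl in *.
    exists (h x). apply F_der.
    destruct Hx as [Hx _]. eapply Rle_trans; [|exact Hx]. apply Rmin_case; lra.
  - eapply filter_imp; [|exact Hpos]. intros [a b] [Ha Hb] x Hx. simpl in *.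
    assert (Hx0 : 0 < x). { destruct Hx as [Hx _]. eapply Rlt_le_trans; [|exact Hx]. apply Rmin_case; lra. }
    apply continuous_ext_loc with h.
    + exists (mkposreal x Hx0). intros y Hy. change (Rabs (y - x) < x) in Hy.
      apply Rabs_def2 in Hy. symmetry. apply is_derive_unique. apply F_der. lra.
    + apply h_cont. lra.
  - exact F_lim0.
  - exact F_liminf.
Qed.
End K.

Lemma Gamma_pos (s : R) : 1 < s -> 0 < Gamma s.
Proof.
  intros Hs. destruct (Gamma_pos_aux s Hs) as [l [H P]].
  unfold Gamma. change (fun t => Rpower t (s - 1) * exp (- t)) with (gint s).
  rewrite (is_RInt_gen_unique _ _ H). exact P.
Qed.

Theorem corollary1 (kappa Teff T_EUV eps_EUV : R) :
  3/2 < kappa -> 0 < Teff -> 0 < T_EUV ->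
  T_EUV = Teff * (1 + eps_EUV) ->
  T_EUV / T_B kappa Teff = kappa / (kappa - 3/2) * (1 + eps_EUV).
Proof.
  intros Hk HT HE Heq.
  assert (HT0 : 0 < T0 kappa Teff) by (unfold T0; apply Rmult_lt_0_compat; lra).
  assert (Hkn : 0 < kappa_norm kappa Teff).
  { unfold kappa_norm. apply Rmult_lt_0_compat.
    - apply Rmult_lt_0_compat. apply Rdiv_lt_0_compat. lra. apply sqrt_lt_R0, PI_RGT_0.
      apply Rdiv_lt_0_compat; apply Gamma_pos; lra.
    - unfold Rpower. apply exp_pos. }
  set (kn := kappa_norm kappa Teff) in *.
  set (T := T0 kappa Teff) in *.
  assert (Hm : mean_inv_sqrtE kappa Teff = kn * T / kappa).
  { unfold mean_inv_sqrtE. apply is_RInt_gen_unique.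
    apply is_RInt_gen_ext with (fun E => kn * Rpower (1 + E/T) (-(kappa+1))).
    2:{ apply kint; lra. }
    apply Filter_prod with (fun a => 0 < a) (fun b => 0 < b).
    - exists (mkposreal 1 Rlt_0_1). intros y _ Hy. exact Hy.
    - exists 0. intros; assumption.
    - intros a b Ha Hb x Hx. simpl in Hx.
      assert (Hx0 : 0 < x). { destruct Hx as [Hx _]. eapply Rle_lt_trans; [|exact Hx]. apply Rmin_case; lra. }
      unfold f_kappa_E. fold kn. fold T.
      assert (0 < sqrt x) by (apply sqrt_lt_R0; lra).
      assert (E : forall P, kn * P = / sqrt x * (kn * sqrt x * P)) by (intros; field; lra). apply E. }
  assert (Hv : f_kappa_v kappa Teff 0 = kn).
  { unfold f_kappa_v. fold kn T. replace (1 + 0 / T) with 1 by (field; lra).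
    unfold Rpower. rewrite ln_1, Rmult_0_r, exp_0. ring. }
  unfold T_B. rewrite Hm, Hv. subst T_EUV. unfold T, T0.
  field. repeat split; lra.
Qed.
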